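(* Let $G_m$ be a totally ascending braid Gauss diagram with $r$ circles. Then $r=m+w(G_m)$.
   Context: Braid Gauss diagrams. $B_m$ is the Artin braid group with generators $\sigma_1,\dots,\sigma_{m-1}$. For a word $\beta$ in $\sigma_i^{\pm1}$, the closed braid diagram $D$ of $\beta$ is obtained by joining the top and bottom endpoints of the $m$ strands by $m$ parallel closing strands; it represents an oriented link. The Gauss diagram $G$ of $D$ has one oriented circle parametrizing each component of $D$, and for each crossing an arrow joining its two preimages, pointing from the overpassing preimage to the underpassing one, carrying the sign (local writhe) of the crossing. An arc of $G$ is a connected component of the complement in the circles of all arrow endpoints. The braid Gauss diagram $G_m$ is $G$ together with labels $a_1,\dots,a_m$, where $a_i$ is the arc of $G$ containing the preimage of the $i$-th closing strand. The writhe $w(G_m)$ is the sum of the signs of all arrows. Totally ascending. Let $G_m$ have $r$ circles. For each circle $C$ let $\mu(C)$ be the smallest index $i$ such that the arc $a_i$ lies on $C$. Order the circles so that $\mu(C_1)<\mu(C_2)<\dots<\mu(C_r)$ (so $\mu(C_1)=1$); $C_i$ is the $i$-th circle. $G_m$ is totally ascending if for every pair $1\le i\le j\le r$: walking once around $C_i$ in its orientation, starting from the arc $a_{\mu(C_i)}$, every arrow connecting $C_i$ and $C_j$ (for $i=j$: every arrow with both endpoints on $C_i$) is met first at its head. *)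

(* Defs.v *)
From HB Require Import structures.
From mathcomp Require Import all_boot all_order all_algebra.
Set Implicit Arguments. Unset Strict Implicit. Unset Printing Implicit Defensive.
Import Order.TTheory GRing.Theory Num.Theory.

(*  - strand positions are 0-based: 0,...,m-1 (position p corresponds   *)
(*    to the paper's index p+1; closing strand p gives arc a_{p+1});    *)
(*  - a letter (i, e) : nat * bool denotes sigma_{i+1} if e = true and  *)
(*    sigma_{i+1}^{-1} if e = false; it exchanges positions i and i+1;  *)
(*  - crossings are numbered 0,...,size w - 1 in word order, and the    *)
(*    strands are traversed from the top (before letter 0) to the       *)
(*    bottom (after the last letter), then back up the closing strands; *)
(*  - the preimage of crossing k on the strand at position i (just      *)
(*    before the crossing) is the point (k,false), the one on the       *)
(*    strand at position i+1 is (k,true);                               *)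
(*  - for sigma_{i+1} (e = true) the strand at position i passes over,  *)
(*    so the arrow points to (k,true), and the sign is +1; for the      *)
(*    inverse letter the strand at position i+1 passes over, the arrow  *)
(*    points to (k,false), and the sign is -1.                          *)

Definition letter := (nat * bool)%type.
Definition point := (nat * bool)%type.

Definition valid_word (m : nat) (w : seq letter) : bool :=
  all (fun l : letter => l.1.+1 < m) w.

Definition swap_pos (i p : nat) : nat :=
  if p == i then i.+1 else if p == i.+1 then i else p.

Definition endpos (w : seq letter) (p : nat) : nat :=
  foldl (fun q (l : letter) => swap_pos l.1 q) p w.

(* crossing preimages met along the strand starting at top position p,
   in order; k is the index of the first letter of w *)
Fixpoint strand_pts (w : seq letter) (k p : nat) : seq point :=
  match w with
  | [::] => [::]
  | l :: w' =>
      (if p == l.1 then [:: (k, false)]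
       else if p == l.1.+1 then [:: (k, true)] else [::])
      ++ strand_pts w' k.+1 (swap_pos l.1 p)
  end.

(* closing strand p leads from bottom position p back to top position p,
   so following a component, closing strand x is followed by closing
   strand (closing_next x) *)
Definition closing_next (m : nat) (w : seq letter) (x : 'I_m) : 'I_m :=
  insubd x (endpos w x).

(* the circle (component) through closing strand x, identified with the
   set of closing strands it contains *)
Definition circle_of (m : nat) (w : seq letter) (x : 'I_m) : {set 'I_m} :=
  [set y | fconnect (closing_next w) x y].

(* the set of circles of the Gauss diagram; r is its cardinality *)
Definition circles (m : nat) (w : seq letter) : {set {set 'I_m}} :=
  [set circle_of w x | x : 'I_m].

Definition is_mu (m : nat) (w : seq letter) (x : 'I_m) : bool :=
  [forall y in circle_of w x, x <= y].

(* the arrow endpoints met when walking once around the circle through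
   closing strand x, starting from (the arc containing) closing strand x *)
Definition walk (m : nat) (w : seq letter) (x : 'I_m) : seq point :=
  flatten [seq strand_pts w 0 (val y) | y <- orbit (closing_next w) x].

(* side of crossing k where the head (underpassing preimage) lies *)
Definition head_side (w : seq letter) (k : nat) : bool :=
  (nth (0, true) w k).2.

Definition first_met (s : seq point) (k : nat) : point :=
  nth (0, false) s (find (fun pt : point => pt.1 == k) s).

(* totally ascending: for circles C_i, C_j with mu(C_i) <= mu(C_j), every
   arrow having one endpoint on C_i and the other on C_j is met first at
   its head when walking around C_i from arc a_{mu(C_i)} *)
Definition totally_ascending (m : nat) (w : seq letter) : Prop :=
  forall x y : 'I_m, is_mu w x -> is_mu w y -> x <= y ->
  forall (k : nat) (b : bool),
    (k, b) \in walk w x -> (k, ~~ b) \in walk w y ->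
    (first_met (walk w x) k).2 = head_side w k.

Definition writhe (w : seq letter) : int :=
  (\sum_(l <- w) (if l.2 then 1 else -1))%R.

(* Main.v *)
Require Import Defs.
From HB Require Import structures.
From mathcomp Require Import all_boot all_order all_algebra zify.
Set Implicit Arguments. Unset Strict Implicit. Unset Printing Implicit Defensive.


Lemma swap_posK i p : swap_pos i (swap_pos i p) = p.
Proof.
rewrite /swap_pos; case: (eqVneq p i) => [->|ne1]; first by rewrite eqxx (gtn_eqF (ltnSn i)).
case: (eqVneq p i.+1) => [->|ne2]; first by rewrite eqxx.
by rewrite (negPf ne1) (negPf ne2).
Qed.

Lemma swap_pos_inj i : injective (swap_pos i).
Proof. exact: (can_inj (swap_posK i)). Qed.

Lemma swap_pos_lt m i p : p < m -> i.+1 < m -> swap_pos i p < m.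
Proof.
rewrite /swap_pos => pm im; case: ifP => [_|_]; first by [].
case: ifP => // _; exact: ltnW.
Qed.

Lemma endpos_cons l t p : endpos (l :: t) p = endpos t (swap_pos l.1 p).
Proof. by []. Qed.

Lemma endpos_take_S (w : seq letter) k p : k < size w ->
  endpos (take k.+1 w) p = swap_pos (nth (0,true) w k).1 (endpos (take k w) p).
Proof. by move=> kw; rewrite (take_nth (0,true) kw) /endpos foldl_rcons. Qed.

Lemma endpos_inj t : injective (endpos t).
Proof.
elim: t => [|l t IH] p q //; rewrite !endpos_cons => /IH; exact: swap_pos_inj.
Qed.

Definition unend (t : seq letter) i := foldr (fun (l : letter) q => swap_pos l.1 q) i t.

Lemma endpos_unend t i : endpos t (unend t i) = i.
Proof. elim: t i => [|l t IH] i //.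
by rewrite endpos_cons [unend _ _]/= swap_posK IH. Qed.

Lemma endpos_lt m t p : all (fun l : letter => l.1.+1 < m) t -> p < m -> endpos t p < m.
Proof.
elim: t p => [|l t IH] p // /andP[lm tm] pm; rewrite endpos_cons; apply: IH => //.
exact: swap_pos_lt.
Qed.

Lemma unend_lt m t p : all (fun l : letter => l.1.+1 < m) t -> p < m -> unend t p < m.
Proof.
elim: t p => [|l t IH] p //= /andP[lm tm] pm; apply: swap_pos_lt => //; exact: IH.
Qed.

Lemma mem_strand_pts w k0 p k b :
  ((k, b) \in strand_pts w k0 p) =
  [&& k0 <= k, k < k0 + size w &
      endpos (take (k - k0) w) p == (nth (0,true) w (k - k0)).1 + b].
Proof.
elim: w k0 p => [|l w IH] k0 p /=.
  by rewrite in_nil addn0; case: (leqP k0 k) => //= h; rewrite ltnNge h.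
rewrite mem_cat IH.
case: (ltngtP k k0) => [lt|gt|->].
- rewrite /= orbF.
  by case: ifP => _; [|case: ifP => _]; rewrite ?inE //= xpair_eqE (ltn_eqF lt).
- rewrite /= addnS -addSn.
  have ->: k - k0 = (k - k0.+1).+1 by rewrite subnS prednK // subn_gt0.
  rewrite take_cons endpos_cons /=.
  have E: ((k, b) \in (if p == l.1 then [:: (k0, false)]
                      else if p == l.1.+1 then [:: (k0, true)] else [::])) = false.
    by case: ifP => _; [|case: ifP => _]; rewrite ?inE //= xpair_eqE eq_sym (ltn_eqF gt).
  by rewrite E.
- rewrite subnn /= orbF addnS ltnS leq_addr /=.
  clear IH; case: (eqVneq p l.1) => [->|ne1].
    by rewrite inE xpair_eqE eqxx /=; case: b; rewrite ?addn0 ?addn1 ?eqxx // (ltn_eqF (ltnSn _)).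
  case: (eqVneq p l.1.+1) => [e2|ne2].
    by rewrite e2 inE xpair_eqE eqxx /=; case: b; rewrite ?addn0 ?addn1 ?eqxx // (gtn_eqF (ltnSn _)).
  by rewrite in_nil; case: b; rewrite ?addn0 ?addn1 ?(negPf ne1) ?(negPf ne2).
Qed.


Section Perm.
Variable m : nat.
Variable w : seq letter.
Hypothesis Hw : valid_word m w.

Local Notation f := (@closing_next m w).

Lemma val_f (x : 'I_m) : val (f x) = endpos w x.
Proof. by rewrite /closing_next val_insubd endpos_lt. Qed.

Lemma f_inj : injective f.
Proof. by move=> x y E; apply: val_inj; apply: (@endpos_inj w); rewrite -!val_f E. Qed.

Definition mu0 (x : 'I_m) : 'I_m := [arg min_(y < x | fconnect f x y) (y : nat)].
Definition mu := locked mu0.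

Lemma mu_spec x : fconnect f x (mu x) /\ forall y, fconnect f x y -> mu x <= y.
Proof.
rewrite /mu -lock /mu0; case: arg_minnP => [|z Hz Hmin]; first exact: connect0.
by split.
Qed.

Lemma mu_conn x : fconnect f (mu x) x.
Proof. by rewrite (fconnect_sym f_inj); case: (mu_spec x). Qed.

Lemma mu_min x y : fconnect f x y -> mu x <= y.
Proof. by case: (mu_spec x) => _; apply. Qed.

Lemma mu_eq x y : fconnect f x y -> mu x = mu y.
Proof.
move=> cxy; apply: val_inj; apply/eqP; rewrite eqn_leq; apply/andP; split.
  apply: mu_min; apply: (connect_trans cxy); rewrite (fconnect_sym f_inj); exact: mu_conn.
apply: mu_min; rewrite (fconnect_sym f_inj) in cxy.
apply: (connect_trans cxy); rewrite (fconnect_sym f_inj); exact: mu_conn.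
Qed.

Lemma is_muE x : is_mu w x = (mu x == x).
Proof.
apply/idP/idP.
  move=> /forallP H; apply/eqP; apply: val_inj; apply/eqP; rewrite eqn_leq.
  rewrite mu_min ?connect0 //=.
  have /implyP := H (mu x); apply; rewrite inE; by case: (mu_spec x).
move/eqP=> E; apply/forallP => y; apply/implyP; rewrite inE => cxy.
by rewrite -{1}E; apply: mu_min.
Qed.

Lemma mu_mu x : mu (mu x) = mu x.
Proof. exact: mu_eq (mu_conn x). Qed.

Lemma is_mu_mu x : is_mu w (mu x).
Proof. by rewrite is_muE mu_mu. Qed.

Lemma mu_f x : mu (f x) = mu x.
Proof. by rewrite (mu_eq (fconnect1 f x)). Qed.

Definition d := locked (fun x : 'I_m => findex f (mu x) x).
Lemma dE x : d x = findex f (mu x) x. Proof. by rewrite /d -lock. Qed.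

Lemma order_le (x : 'I_m) : order f x <= m.
Proof. by rewrite /order; apply: leq_trans (max_card _) _; rewrite card_ord. Qed.

Lemma d_lt_order x : d x < order f (mu x).
Proof. rewrite dE; exact: findex_max (mu_conn x). Qed.

Lemma d_lt x : d x < m.
Proof. exact: leq_trans (d_lt_order x) (order_le _). Qed.

Definition key := locked (fun x : 'I_m => mu x * m + d x).
Lemma keyE x : key x = mu x * m + d x. Proof. by rewrite /key -lock. Qed.

Lemma key_lt_aux u v a b : a < m -> b < m ->
  (u * m + a < v * m + b) = (u < v) || ((u == v) && (a < b)).
Proof.
move=> am bm; case: (ltngtP u v) => [uv|vu|->] /=.
- apply: (leq_trans (n := u * m + m)); first by rewrite ltn_add2l.
  apply: leq_trans (leq_addr _ _); rewrite -mulSnr leq_mul2r uv orbT //.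
- apply/negbTE; rewrite -leqNgt.
  apply: (leq_trans (n := v * m + m)); first by rewrite ltnW // ltn_add2l.
  apply: leq_trans (leq_addr _ _); rewrite -mulSnr leq_mul2r vu orbT //.
- by rewrite ltn_add2l.
Qed.

Lemma key_lt x y : (key x < key y) = (mu x < mu y) || ((mu x == mu y) && (d x < d y)).
Proof. by rewrite !keyE key_lt_aux ?d_lt. Qed.

Lemma same_mu_d x y : mu x = mu y -> d x = d y -> x = y.
Proof.
move=> Em Ed.
by rewrite -(iter_findex (mu_conn x)) -(iter_findex (mu_conn y)) -!dE Em Ed.
Qed.

Lemma key_inj : injective key.
Proof.
move=> x y E.
have Hxy : false = (mu x < mu y) || (mu x == mu y) && (d x < d y).
  by rewrite -key_lt E ltnn.
have Hyx : false = (mu y < mu x) || (mu y == mu x) && (d y < d x).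
  by rewrite -key_lt E ltnn.
move/esym/negbT/norP: Hxy => [/negbTE h1 h2]; move/esym/negbT/norP: Hyx => [/negbTE h3 h4].
have Em : mu x = mu y.
  by apply: val_inj; apply/eqP; rewrite eqn_leq leqNgt h3 leqNgt h1.
apply: same_mu_d => //.
move: h2 h4; rewrite Em eqxx /= => h2 h4.
by apply/eqP; rewrite eqn_leq leqNgt (negbTE h4) leqNgt (negbTE h2).
Qed.

Lemma d_f x : f x != mu x -> d (f x) = (d x).+1.
Proof.
move=> ne.
have Hx := iter_findex (mu_conn x); rewrite -dE in Hx.
have Hlt := d_lt_order x.
have Efx : f x = iter (d x).+1 f (mu x) by rewrite iterS Hx.
case: (ltngtP (d x).+1 (order f (mu x))) => [lt|gt|eq].
- by rewrite dE mu_f Efx findex_iter.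
- by move: gt; rewrite ltnS leqNgt Hlt.
- by move: ne; rewrite Efx eq iter_order ?eqxx //; exact: f_inj.
Qed.

Lemma d_f_mu x : f x = mu x -> (d x).+1 = order f (mu x).
Proof.
move=> E; have Hx := iter_findex (mu_conn x); rewrite -dE in Hx.
have Hlt := d_lt_order x.
have Efx : f x = iter (d x).+1 f (mu x) by rewrite iterS Hx.
case: (ltngtP (d x).+1 (order f (mu x))) => [lt|gt|eq] //.
- by have := findex_iter lt; rewrite -Efx E findex0.
- by move: gt; rewrite ltnS leqNgt Hlt.
Qed.

Lemma d_mu x : d (mu x) = 0.
Proof. by rewrite dE mu_mu findex0. Qed.


Lemma P1disj a b : is_mu w a && fconnect f a b -> (key b < key a) = false.
Proof.
case/andP; rewrite is_muE => /eqP Ea cab.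
by rewrite key_lt -(mu_eq cab) ltnn /= (dE a) Ea findex0 ltn0 andbF.
Qed.

Lemma P1 p q : f p < f q ->
  (key q < key p) = (key (f q) < key (f p)) || (is_mu w (f p) && fconnect f (f p) (f q)).
Proof.
move=> lt; have mua := mu_f p; have mub := mu_f q.
case: (eqVneq (mu p) (mu q)) => [Em|Nm].
- have cab : fconnect f (f p) (f q).
    apply: (connect_trans (y := mu q)); last by rewrite -mub mu_conn.
    by rewrite -Em -mua (fconnect_sym f_inj) mu_conn.
  rewrite cab andbT is_muE mua !key_lt mua mub Em eqxx ltnn /=.
  case: (eqVneq (f p) (mu p)) => [Ea|Na].
  + rewrite -Em -Ea eqxx orbT.
    have Hd := d_f_mu Ea; have Hq := d_lt_order q; rewrite -Em -Hd ltnS in Hq.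
    rewrite ltn_neqAle Hq andbT; apply/eqP => Edd.
    have Epq : q = p by apply: same_mu_d.
    by move: lt; rewrite Epq ltnn.
  + have Nb : f q != mu q.
      apply/eqP => Eb; move: lt; rewrite Eb -Em -mua ltnNge.
      by rewrite mu_min ?connect0.
    rewrite (d_f Na) (d_f Nb) ltnS -Em eq_sym (negPf Na) orbF //.
- have -> : fconnect f (f p) (f q) = false.
    apply/negbTE/negP => /mu_eq; rewrite mua mub; exact/eqP.
  by rewrite andbF orbF !key_lt mua mub eq_sym (negPf Nm).
Qed.


Lemma nonmu_count (b : 'I_m) :
  \sum_(a : 'I_m) (((a < b) && is_mu w a && fconnect f a b) : nat) = ~~ is_mu w b.
Proof.
case Hb: (is_mu w b) => /=.
  apply: big1 => a _; case Ha: (is_mu w a); rewrite ?andbF //=.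
  case Hc: (fconnect f a b); rewrite ?andbF ?andbT //=.
  move: Ha Hb; rewrite !is_muE (mu_eq Hc) => /eqP-> /eqP->; by rewrite ltnn.
have Hmb : mu b < b.
  rewrite ltn_neqAle mu_min ?connect0 // andbT.
  by move: Hb; rewrite is_muE => /negbT.
rewrite (bigD1 (mu b)) //= Hmb is_mu_mu mu_conn /=.
rewrite big1 // => a /negPf Na.
case Ha: (is_mu w a); rewrite ?andbF //=.
case Hc: (fconnect f a b); rewrite ?andbF ?andbT //=.
by move: Ha; rewrite is_muE (mu_eq Hc) eq_sym Na.
Qed.

Lemma count_step :
  \sum_(pq : 'I_m * 'I_m) (((f pq.1 < f pq.2) && (key pq.2 < key pq.1)) : nat)
  = \sum_(pq : 'I_m * 'I_m) (((pq.1 < pq.2) && (key pq.2 < key pq.1)) : nat)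
    + #|[pred b : 'I_m | ~~ is_mu w b]|.
Proof.
have h : injective (fun pq : 'I_m * 'I_m => (f pq.1, f pq.2)).
  by move=> [a b] [c e] /= [/f_inj-> /f_inj->].
have -> : #|[pred b : 'I_m | ~~ is_mu w b]| =
   \sum_(pq : 'I_m * 'I_m) (((pq.1 < pq.2) && is_mu w pq.1 && fconnect f pq.1 pq.2) : nat).
  rewrite -(pair_bigA _ (fun a b : 'I_m => (((a < b) && is_mu w a && fconnect f a b) : nat))).
  rewrite exchange_big /= -sum1_card big_mkcond /=.
  apply: eq_bigr => b _; rewrite nonmu_count inE; by case: (is_mu w b).
rewrite [X in _ = X + _](reindex_inj h) [X in _ = _ + X](reindex_inj h) /= -big_split /=.
apply: eq_bigr => [[p q]] _ /=.
case: (ltnP (f p) (f q)) => lt //=.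
rewrite P1 //; case E: (is_mu w (f p) && fconnect f (f p) (f q)).
  by rewrite P1disj.
by rewrite orbF addn0.
Qed.

Lemma circles_card : #|circles m w| = #|[pred x : 'I_m | is_mu w x]|.
Proof.
have -> : circles m w = (circle_of w) @: [set x : 'I_m | is_mu w x].
  apply/setP => C; apply/imsetP/imsetP => [[x _ ->]|[x _ ->]]; last by exists x.
  exists (mu x); first by rewrite inE is_mu_mu.
  apply/setP => y; rewrite !inE; apply/idP/idP => H.
    apply: (connect_trans _ H); exact: mu_conn.
  apply: (connect_trans _ H); rewrite (fconnect_sym f_inj); exact: mu_conn.
rewrite card_in_imset; first by apply: eq_card => x; rewrite inE.
move=> a b; rewrite !inE => Ha Hb E.
have : b \in circle_of w a by rewrite E inE connect0.
rewrite inE => /mu_eq; move: Ha Hb; rewrite !is_muE => /eqP-> /eqP->; done.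
Qed.

End Perm.


Section FM.
Variable k : nat.
Local Notation P := (fun pt : point => pt.1 == k).

Lemma FM_cat1 s1 s2 : has P s1 -> first_met (s1 ++ s2) k = first_met s1 k.
Proof. by move=> h; rewrite /first_met find_cat h nth_cat -has_find h. Qed.

Lemma FM_cat2 s1 s2 : ~~ has P s1 -> first_met (s1 ++ s2) k = first_met s2 k.
Proof.
by move=> /negPf h; rewrite /first_met find_cat h nth_cat ltnNge leq_addr /= addKn.
Qed.

Lemma FM_single s b : (k, b) \in s -> (k, ~~ b) \notin s -> first_met s k = (k, b).
Proof.
move=> inb notb.
have hs : has P s by apply/hasP; exists (k, b).
have := nth_find (0, false) hs; have : find P s < size s by rewrite -has_find. move=> /(mem_nth (0, false)). 
rewrite /first_met; case: (nth _ _ _) => k' b' /= H /eqP Ek; subst k'.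
case: (b' =P b) => [->//|/eqP nb].
have E : b' = ~~ b by move: nb; clear; case: b; case: b'.
by move: notb; rewrite -E H.
Qed.

Lemma FMF (T : eqType) (g : T -> seq point) (a b : T) (o : seq T) :
  (forall z, z \in o -> has P (g z) -> z = a \/ z = b) -> has P (g a) ->
  index a o < index b o ->
  first_met (flatten (map g o)) k = first_met (g a) k.
Proof.
elim: o => [|z o IH] //= H ha.
case: (eqVneq z a) => [->|nza]; first by rewrite FM_cat1.
case: (eqVneq z b) => [->|nzb]; first by [].
rewrite ltnS => lt; rewrite FM_cat2; last first.
  apply/negP => hz; have [] := H z (mem_head _ _) hz => E; by move: nza nzb; rewrite E eqxx.
apply: IH => // y yo; apply: H; by rewrite inE yo orbT.
Qed.
End FM.

Lemma all_take_aux (T : Type) (a : pred T) s n : all a s -> all a (take n s).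
Proof. by rewrite -{1}(cat_take_drop n s) all_cat => /andP[]. Qed.

Lemma swap_lt i a b : a != b ->
  (swap_pos i a < swap_pos i b) =
  (if (a == i) && (b == i.+1) then false
   else if (a == i.+1) && (b == i) then true else a < b).
Proof.
move=> nab; rewrite /swap_pos.
case: (eqVneq a i) => [ai|nai]; case: (eqVneq b i) => [bi|nbi] /=;
 case: (eqVneq a i.+1) => [ai1|nai1]; case: (eqVneq b i.+1) => [bi1|nbi1] /=;
 lia.
Qed.


Section Braid.
Variable m : nat.
Variable w : seq letter.
Hypothesis Hw : valid_word m w.
Local Notation f := (@closing_next m w).

Definition pos k (p : 'I_m) := endpos (take k w) p.
Definition tk k (pq : 'I_m * 'I_m) : nat :=
  (pos k pq.1 < pos k pq.2) && (key w pq.2 < key w pq.1).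
Definition invb k := \sum_(pq : 'I_m * 'I_m) tk k pq.

Lemma pos_inj k : injective (pos k).
Proof. by move=> x y /endpos_inj /val_inj. Qed.

Lemma pts_mem k b (p : 'I_m) :
  ((k, b) \in strand_pts w 0 p) = (k < size w) && (pos k p == (nth (0,true) w k).1 + b).
Proof. by rewrite mem_strand_pts subn0 add0n. Qed.

Section Step.
Variable k : nat.
Hypothesis Hk : k < size w.
Local Notation i := (nth (0,true) w k).1.

Lemma Hi : i.+1 < m.
Proof. exact: (allP Hw) _ (mem_nth _ Hk). Qed.

Definition p0 : 'I_m := Ordinal (unend_lt (all_take_aux k Hw) (ltnW Hi)).
Definition q0 : 'I_m := Ordinal (unend_lt (all_take_aux k Hw) Hi).

Lemma Hp0 : pos k p0 = i.
Proof. exact: endpos_unend. Qed.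
Lemma Hq0 : pos k q0 = i.+1.
Proof. exact: endpos_unend. Qed.

Lemma p0q0 : p0 != q0.
Proof.
apply/eqP => /(congr1 (pos k)); rewrite Hp0 Hq0 => /eqP.
by rewrite (ltn_eqF (ltnSn _)).
Qed.

Lemma pos_S p : pos k.+1 p = swap_pos i (pos k p).
Proof. exact: endpos_take_S. Qed.

Lemma inv_split k' : invb k' = tk k' (p0, q0) + (tk k' (q0, p0) +
  \sum_(pq | (pq != (p0, q0)) && (pq != (q0, p0))) tk k' pq).
Proof.
rewrite /invb (bigD1 (p0, q0)) //= (bigD1 (q0, p0)) /=; last first.
  by rewrite xpair_eqE negb_and eq_sym p0q0.
by [].
Qed.

Lemma step : invb k.+1 + (key w q0 < key w p0) = invb k + (key w p0 < key w q0).
Proof.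
have sw1 : swap_pos i i = i.+1 by rewrite /swap_pos eqxx.
have sw2 : swap_pos i i.+1 = i by rewrite /swap_pos (gtn_eqF (ltnSn _)) eqxx.
rewrite !inv_split.
have -> : tk k.+1 (p0, q0) = 0 by rewrite /tk /= !pos_S Hp0 Hq0 sw1 sw2 ltnNge leqnSn.
have -> : tk k (q0, p0) = 0 by rewrite /tk /= Hp0 Hq0 ltnNge leqnSn.
have -> : tk k.+1 (q0, p0) = (key w p0 < key w q0).
  by rewrite /tk /= !pos_S Hp0 Hq0 sw1 sw2 ltnSn.
have -> : tk k (p0, q0) = (key w q0 < key w p0) by rewrite /tk /= Hp0 Hq0 ltnSn.
have -> : \sum_(pq | (pq != (p0, q0)) && (pq != (q0, p0))) tk k.+1 pq =
          \sum_(pq | (pq != (p0, q0)) && (pq != (q0, p0))) tk k pq.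
  apply: eq_bigr => [[p q]] /andP[n1 n2]; rewrite /tk /= !pos_S.
  case: (eqVneq p q) => [->|npq]; first by rewrite !ltnn.
  have npos : pos k p != pos k q by rewrite (inj_eq (@pos_inj k)).
  rewrite swap_lt // -Hq0 -Hp0 !(inj_eq (@pos_inj k)).
  move: n1 n2; rewrite !xpair_eqE.
  by case: (p == p0); case: (q == q0); case: (p == q0); case: (q == p0).
lia.
Qed.


Local Notation P := (fun pt : point => pt.1 == k).
Local Notation g := (fun y : 'I_m => strand_pts w 0 y).

Lemma in_p0 : (k, false) \in strand_pts w 0 p0.
Proof. by rewrite pts_mem Hk Hp0 addn0 eqxx. Qed.
Lemma in_q0 : (k, true) \in strand_pts w 0 q0.
Proof. by rewrite pts_mem Hk Hq0 addn1 eqxx. Qed.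
Lemma nin_p0 : (k, ~~ false) \notin strand_pts w 0 p0.
Proof. by rewrite pts_mem Hk Hp0 addn1 (ltn_eqF (ltnSn _)). Qed.
Lemma nin_q0 : (k, ~~ true) \notin strand_pts w 0 q0.
Proof. by rewrite pts_mem Hk Hq0 addn0 (gtn_eqF (ltnSn _)). Qed.

Lemma fm_p0 : first_met (strand_pts w 0 p0) k = (k, false).
Proof. exact: FM_single in_p0 nin_p0. Qed.
Lemma fm_q0 : first_met (strand_pts w 0 q0) k = (k, true).
Proof. exact: FM_single in_q0 nin_q0. Qed.

Lemma has_p0 : has P (strand_pts w 0 p0).
Proof. by apply/hasP; exists (k, false); [exact: in_p0|]. Qed.
Lemma has_q0 : has P (strand_pts w 0 q0).
Proof. by apply/hasP; exists (k, true); [exact: in_q0|]. Qed.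

Lemma has_k z : has P (g z) -> z = p0 \/ z = q0.
Proof.
case/hasP => [[k' b] H /= /eqP Ek]; subst k'.
move: H; rewrite pts_mem => /andP[_ /eqP E].
case: b E => E; [right|left]; apply: (@pos_inj k).
  by rewrite E Hq0 addn1.
by rewrite E Hp0 addn0.
Qed.

Lemma in_walk (p : 'I_m) b : (k, b) \in g p -> (k, b) \in walk w (mu w p).
Proof.
move=> H; rewrite /walk; apply/flatten_mapP; exists p => //.
by rewrite -fconnect_orbit mu_conn.
Qed.

Lemma TA_sign : totally_ascending m w -> (nth (0,true) w k).2 = (key w q0 < key w p0).
Proof.
move=> Hta.
have inx := in_walk in_p0; have iny := in_walk in_q0.
have hk1 : forall z, z \in orbit f (mu w p0) -> has P (g z) -> z = p0 \/ z = q0.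
  by move=> z _ /has_k.
rewrite (key_lt Hw).
case: (ltngtP (mu w p0) (mu w q0)) => [lt|gt|eq].
- have Nqp : (mu w q0 == mu w p0) = false.
    by apply/negbTE/eqP => E; move: lt; rewrite E ltnn.
  rewrite Nqp /=.
  have := Hta _ _ (is_mu_mu Hw p0) (is_mu_mu Hw q0) (ltnW lt) k false inx iny.
  rewrite /walk (FMF (a := p0) (b := q0)) ?fm_p0 //; first exact: has_p0.
  have Hin : p0 \in orbit f (mu w p0) by rewrite -fconnect_orbit mu_conn.
  have Hnin : q0 \notin orbit f (mu w p0).
    rewrite -fconnect_orbit; apply/negP => /(mu_eq Hw); rewrite (mu_mu Hw) => E.
    by move: lt; rewrite E ltnn.
  by rewrite (memNindex Hnin) index_mem.
- have hk2 : forall z, z \in orbit f (mu w q0) -> has P (g z) -> z = q0 \/ z = p0.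
    by move=> z _ /has_k [] ->; [right|left].
  rewrite /=.
  have := Hta _ _ (is_mu_mu Hw q0) (is_mu_mu Hw p0) (ltnW gt) k true iny inx.
  rewrite /walk (FMF (a := q0) (b := p0)) ?fm_q0 //; first exact: has_q0.
  have Hin : q0 \in orbit f (mu w q0) by rewrite -fconnect_orbit mu_conn.
  have Hnin : p0 \notin orbit f (mu w q0).
    rewrite -fconnect_orbit; apply/negP => /(mu_eq Hw); rewrite (mu_mu Hw) => E.
    by move: gt; rewrite E ltnn.
  by rewrite (memNindex Hnin) index_mem.
- have E : mu w p0 = mu w q0 by apply: val_inj.
  rewrite E eqxx /=.
  have iny' : (k, true) \in walk w (mu w p0) by rewrite E.
  have := Hta _ _ (is_mu_mu Hw p0) (is_mu_mu Hw p0) (leqnn _) k false inx iny'.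
  have Ed1 : index p0 (orbit f (mu w p0)) = d w p0 by rewrite dE.
  have Ed2 : index q0 (orbit f (mu w p0)) = d w q0 by rewrite dE -E.
  have Nd : d w p0 != d w q0.
    apply/eqP => Ed; have := p0q0; by rewrite (same_mu_d Hw E Ed) eqxx.
  case: (ltngtP (d w p0) (d w q0)) => [l|g'|e']; last by rewrite e' eqxx in Nd.
  + rewrite /walk (FMF (a := p0) (b := q0)) ?fm_p0 //; first exact: has_p0.
    by rewrite Ed1 Ed2.
  + have hk2 : forall z, z \in orbit f (mu w p0) -> has P (g z) -> z = q0 \/ z = p0.
      by move=> z _ /has_k [] ->; [right|left].
    rewrite /walk (FMF (a := q0) (b := p0)) ?fm_q0 //; first exact: has_q0.
    by rewrite Ed1 Ed2.
Qed.

End Step.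
End Braid.

Import GRing.Theory.

Lemma sign_step m w (Hw : valid_word m w) (Hta : totally_ascending m w) k :
  k < size w ->
  ((if (nth (0,true) w k).2 then 1 else -1) = (invb m w k)%:Z - (invb m w k.+1)%:Z)%R.
Proof.
move=> Hk.
have S := step Hw Hk; have T := TA_sign Hw Hk Hta.
have Nk : key w (q0 Hw Hk) != key w (p0 Hw Hk).
  by apply/eqP => /(key_inj Hw) E; have := p0q0 Hw Hk; rewrite E eqxx.
rewrite T; move: S Nk.
case: (ltngtP (key w (q0 Hw Hk)) (key w (p0 Hw Hk))) => /= H S Nk; lia.
Qed.

Theorem lemma4p3 (m : nat) (w : seq (nat * bool)) :
  valid_word m w -> totally_ascending m w ->
  (#|circles m w|%:Z = m%:Z + writhe w)%R.
Proof.
move=> Hw Hta.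
have Hwr : writhe w = ((invb m w 0)%:Z - (invb m w (size w))%:Z)%R.
  rewrite /writhe (big_nth (0,true)).
  rewrite (@telescope_sumr_eq _ _ _ (fun k => (- (invb m w k)%:Z)%R)) ?leq0n.
    by rewrite opprK addrC.
    by [].
  move=> k /andP[_ Hk]; rewrite (sign_step Hw Hta Hk) opprK addrC.
  by [].
have I0 : invb m w 0 = \sum_(pq : 'I_m * 'I_m) (((pq.1 < pq.2) && (key w pq.2 < key w pq.1)) : nat).
  by rewrite /invb /tk /pos take0.
have In : invb m w (size w) =
   \sum_(pq : 'I_m * 'I_m) (((closing_next w pq.1 < closing_next w pq.2)
                            && (key w pq.2 < key w pq.1)) : nat).
  by apply: eq_bigr => pq _; rewrite /tk /pos take_size !(val_f Hw).
have C := count_step Hw; rewrite -I0 -In in C.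
have R := circles_card Hw.
have Cc := cardC [pred x : 'I_m | is_mu w x]; rewrite card_ord in Cc.
have E2 : #|[predC [pred x : 'I_m | is_mu w x]]| = #|[pred b : 'I_m | ~~ is_mu w b]|.
  by apply: eq_card.
rewrite E2 in Cc.
rewrite Hwr R; clear I0 In E2 Hwr R.
move: (invb m w 0) (invb m w (size w)) C => a b C.
move: (#|[pred x : 'I_m | is_mu w x]|) (#|[pred b : 'I_m | ~~ is_mu w b]|) Cc C => u v Cc C.
lia.
Qed.
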